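(* Let $m_1,r\ge1$ be integers, $p\in[1,\infty)$, $q\in[1,\infty]$, $c_o>0$, and let $g:\mathbb{R}^{m_1}\to\mathbb{R}$, $g(x)=\sum_{i=1}^r c_i\,\sigma(w_i^Tx+b_i)$, where $c_i,b_i\in\mathbb{R}$, $w_i\in\mathbb{R}^{m_1}$, $\sum_{i=1}^r|c_i|\le c_o$ and $\|(b_i,w_i^T)\|_1=1$ for each $i$. Then for every integer $k\in[1,r]$, $$g\in\mathcal{N}^{k,\mathbf d^k}_{p,q,\,wid_k^{1/q},\,2c_o},$$ where $wid_k=\lceil r/k\rceil+2m_1+3$ and $\mathbf d^k=(m_1,wid_k,\dots,wid_k,1)$ (with $d^k_0=m_1$, $d^k_i=wid_k$ for $i=1,\dots,k$, $d^k_{k+1}=1$).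
   Context: $\sigma(u)=\max(u,0)$, applied coordinatewise; $wid_k^{1/\infty}=1$. For a real $s_1\times s_2$ matrix $A=(a_{ij})$: $\|A\|_{p,q}=\big(\sum_{j=1}^{s_2}(\sum_{i=1}^{s_1}|a_{ij}|^p)^{q/p}\big)^{1/q}$ for $q<\infty$, $\|A\|_{p,\infty}=\max_j(\sum_{i}|a_{ij}|^p)^{1/p}$. An affine map $T:\mathbb{R}^{a}\to\mathbb{R}^{b}$, $T(u)=W^Tu+B$, is identified with $\tilde V\in\mathbb{R}^{(a+1)\times b}$ whose first row is $B^T$ and remaining rows form $W$; $\|T\|_{p,q}:=\|\tilde V\|_{p,q}$. For $k\ge0$, width vector $\mathbf d=(d_0,\dots,d_{k+1})$ and $c,c_o>0$, $\mathcal{N}^{k,\mathbf d}_{p,q,c,c_o}$ is the set of all $f=T_{k+1}\circ\sigma\circ T_k\circ\cdots\circ\sigma\circ T_1:\mathbb{R}^{d_0}\to\mathbb{R}^{d_{k+1}}$ with affine $T_i:\mathbb{R}^{d_{i-1}}\to\mathbb{R}^{d_i}$, $\|T_i\|_{p,q}=c$ for $i\le k$ and $\|T_{k+1}\|_{p,q}\le c_o$. *)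

(* Defs.v *)
From Stdlib Require Import Reals Lra Lia.
Open Scope R_scope.

(* Vectors in R^n are functions nat -> R (only coordinates < n matter);
   matrices in R^{s1 x s2} are functions nat -> nat -> R (entries (i,j), i<s1, j<s2). *)

Fixpoint rsum (n : nat) (f : nat -> R) : R :=
  match n with O => 0 | S n' => rsum n' f + f n' end.

(* max_{i<n} f i  (0 for n = 0; used only on nonnegative quantities) *)
Fixpoint rmax (n : nat) (f : nat -> R) : R :=
  match n with O => 0 | S n' => Rmax (rmax n' f) (f n') end.

(* x^y for x >= 0 and y > 0, with the convention 0^y = 0 *)
Definition ppow (x y : R) : R :=
  if Req_EM_T x 0 then 0 else Rpower x y.

Inductive extR := Fin (r : R) | Inf.

Definition colnorm (p : R) (s1 : nat) (A : nat -> nat -> R) (j : nat) : R :=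
  ppow (rsum s1 (fun i => ppow (Rabs (A i j)) p)) (1 / p).

Definition mnorm (p : R) (q : extR) (s1 s2 : nat) (A : nat -> nat -> R) : R :=
  match q with
  | Fin q' => ppow (rsum s2 (fun j =>
                 ppow (rsum s1 (fun i => ppow (Rabs (A i j)) p)) (q' / p))) (1 / q')
  | Inf => rmax s2 (colnorm p s1 A)
  end.

Definition relu (u : R) : R := Rmax u 0.

(* Affine map R^a -> R^b encoded by an (a+1) x b matrix V:
   row 0 is the bias B^T, rows 1..a form W; T(u) = W^T u + B. *)
Definition affine (a : nat) (V : nat -> nat -> R) (u : nat -> R) : nat -> R :=
  fun j => V 0%nat j + rsum a (fun i => V (S i) j * u i).

Definition affnorm (p : R) (q : extR) (a b : nat) (V : nat -> nat -> R) : R :=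
  mnorm p q (S a) b V.

Fixpoint hidden (d : nat -> nat) (Ts : nat -> nat -> nat -> R) (i : nat)
    (x : nat -> R) : nat -> R :=
  match i with
  | O => x
  | S i' => fun j => relu (affine (d i') (Ts (S i')) (hidden d Ts i' x) j)
  end.

Definition realize (k : nat) (d : nat -> nat) (Ts : nat -> nat -> nat -> R)
    (x : nat -> R) : nat -> R :=
  affine (d k) (Ts (S k)) (hidden d Ts k x).

Definition NN (k : nat) (d : nat -> nat) (p : R) (q : extR) (c co : R)
    (f : (nat -> R) -> (nat -> R)) : Prop :=
  exists Ts : nat -> nat -> nat -> R,
    (forall i, (1 <= i <= k)%nat -> affnorm p q (d (i - 1)%nat) (d i) (Ts i) = c) /\
    affnorm p q (d k) (d (S k)) (Ts (S k)) <= co /\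
    (forall x j, (j < d (S k))%nat -> f x j = realize k d Ts x j).

(* wid_k = ceil(r/k) + 2 m1 + 3 *)
Definition wid (r k m1 : nat) : nat := ((r + k - 1) / k + 2 * m1 + 3)%nat.

Definition wid_root (w : nat) (q : extR) : R :=
  match q with Fin q' => Rpower (INR w) (1 / q') | Inf => 1 end.

Definition dk (k m1 w : nat) : nat -> nat :=
  fun i => if Nat.eqb i 0 then m1 else if Nat.leb i k then w else 1%nat.

Definition q_ok (q : extR) : Prop :=
  match q with Fin q' => 1 <= q' | Inf => True end.

Arguments dk (k m1 w)%_nat_scope _%_nat_scope.
Arguments wid (r k m1)%_nat_scope.
Arguments wid_root w%_nat_scope q.

(* Main.v *)
Require Import Defs.
From Stdlib Require Import Reals Lra Lia.
Open Scope R_scope.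

Lemma rsum_ext n f g : (forall i, (i < n)%nat -> f i = g i) -> rsum n f = rsum n g.
Proof. induction n; simpl; intros H; auto. rewrite IHn by (intros; apply H; lia). rewrite H by lia; auto. Qed.

Lemma rsum_plus n f g : rsum n (fun i => f i + g i) = rsum n f + rsum n g.
Proof. induction n; simpl; [lra|]. rewrite IHn; lra. Qed.

Lemma rsum_scal n a f : rsum n (fun i => a * f i) = a * rsum n f.
Proof. induction n; simpl; [lra|]. rewrite IHn; lra. Qed.

Lemma rsum_opp n f : rsum n (fun i => - f i) = - rsum n f.
Proof. induction n; simpl; [lra|]. rewrite IHn; lra. Qed.

Lemma rsum_split a b f : rsum (a + b) f = rsum a f + rsum b (fun i => f (a + i)%nat).
Proof. induction b; simpl. rewrite Nat.add_0_r; lra. rewrite Nat.add_succ_r; simpl. rewrite IHb; lra. Qed.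

Lemma rsum_shift n f : rsum (S n) f = f 0%nat + rsum n (fun i => f (S i)).
Proof. replace (S n) with (1 + n)%nat by lia. rewrite rsum_split. simpl. lra. Qed.

Lemma rsum_zero n f : (forall i, (i < n)%nat -> f i = 0) -> rsum n f = 0.
Proof. intros H. rewrite (rsum_ext n f (fun _ => 0)) by auto. clear. induction n; simpl; lra. Qed.

Lemma rsum_single n f a : (a < n)%nat -> (forall i, (i < n)%nat -> i <> a -> f i = 0) -> rsum n f = f a.
Proof.
  intros Ha H. replace n with (a + (1 + (n - a - 1)))%nat by lia.
  rewrite rsum_split, rsum_split. rewrite (rsum_zero a) by (intros; apply H; lia).
  rewrite (rsum_zero (n - a - 1)) by (intros; apply H; lia). simpl. rewrite Nat.add_0_r. lra.
Qed.

Lemma rsum_le n f g : (forall i, (i < n)%nat -> f i <= g i) -> rsum n f <= rsum n g.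
Proof. induction n; simpl; intros H; [lra|]. pose proof (H n ltac:(lia)). pose proof (IHn ltac:(intros; apply H; lia)). lra. Qed.

Lemma rsum_nonneg n f : (forall i, (i < n)%nat -> 0 <= f i) -> 0 <= rsum n f.
Proof. intros H. rewrite <- (rsum_zero n (fun _ => 0)) by auto. apply rsum_le; auto. Qed.

Lemma rsum_const n a : rsum n (fun _ => a) = INR n * a.
Proof. induction n; [simpl; lra|]. rewrite S_INR. cbn [rsum]. rewrite IHn. lra. Qed.

Lemma rsum_term_le n f a : (forall i, (i < n)%nat -> 0 <= f i) -> (a < n)%nat -> f a <= rsum n f.
Proof.
  intros H Ha. replace n with (a + (1 + (n - a - 1)))%nat by lia.
  rewrite rsum_split, rsum_split. simpl. rewrite Nat.add_0_r.
  assert (0 <= rsum a f) by (apply rsum_nonneg; intros; apply H; lia).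
  assert (0 <= rsum (n - a - 1) (fun i => f (a + S i)%nat)) by (apply rsum_nonneg; intros; apply H; lia).
  lra.
Qed.

Lemma rsum_nonneg_zero n f : (forall i, (i < n)%nat -> 0 <= f i) -> rsum n f = 0 ->
  forall i, (i < n)%nat -> f i = 0.
Proof.
  intros H Hs i Hi. pose proof (rsum_term_le n f i H Hi). pose proof (H i Hi). lra.
Qed.

Lemma rsum_update n f g z : (z < n)%nat -> (forall i, (i < n)%nat -> i <> z -> f i = g i) ->
  rsum n f = rsum n g - g z + f z.
Proof.
  intros Hz H. replace n with (z + (1 + (n - z - 1)))%nat by lia.
  rewrite !rsum_split. simpl. rewrite !Nat.add_0_r.
  rewrite (rsum_ext z f g) by (intros; apply H; lia).
  rewrite (rsum_ext _ (fun i => f (z + S i)%nat) (fun i => g (z + S i)%nat)) by (intros; apply H; lia).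
  lra.
Qed.

Lemma Rpower_1_base y : Rpower 1 y = 1.
Proof. unfold Rpower. rewrite ln_1, Rmult_0_r, exp_0. auto. Qed.

Lemma Rpower_pos x y : 0 < Rpower x y.
Proof. unfold Rpower. apply exp_pos. Qed.

Lemma ppow_nonneg x y : 0 <= ppow x y.
Proof. unfold ppow. destruct (Req_EM_T x 0). lra. left; apply Rpower_pos. Qed.

Lemma ppow_0 y : ppow 0 y = 0.
Proof. unfold ppow. destruct (Req_EM_T 0 0); [auto|congruence]. Qed.

Lemma ppow_1 y : ppow 1 y = 1.
Proof. unfold ppow. destruct (Req_EM_T 1 0). lra. apply Rpower_1_base. Qed.

Lemma ppow_pos x y : 0 < x -> ppow x y = Rpower x y.
Proof. intros. unfold ppow. destruct (Req_EM_T x 0). lra. auto. Qed.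

Lemma ppow_pow x y z : ppow (ppow x y) z = ppow x (y * z).
Proof.
  unfold ppow at 2. destruct (Req_EM_T x 0).
  - subst. rewrite ppow_0, ppow_0. auto.
  - rewrite ppow_pos by apply Rpower_pos. rewrite Rpower_mult. unfold ppow.
    destruct (Req_EM_T x 0); [congruence|auto].
Qed.

Lemma ppow_inv x p : 0 < p -> ppow (ppow x (1/p)) p = ppow x 1.
Proof. intros. rewrite ppow_pow. f_equal. field. lra. Qed.

Lemma ppow_exp1 x : 0 <= x -> ppow x 1 = x.
Proof. intros H. unfold ppow. destruct (Req_EM_T x 0). lra. apply Rpower_1. lra. Qed.

Lemma ppow_zero_inv x y : ppow x y = 0 -> x = 0.
Proof. unfold ppow. destruct (Req_EM_T x 0); auto. intros H. pose proof (Rpower_pos x y). lra. Qed.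

Lemma ppow_mono x y z : 0 <= z -> 0 <= x <= y -> ppow x z <= ppow y z.
Proof.
  intros Hz Hxy. destruct (Req_EM_T x 0).
  - subst. rewrite ppow_0. apply ppow_nonneg.
  - rewrite !ppow_pos by lra. apply Rle_Rpower_l; lra.
Qed.

Lemma ppow_le_1 x y : 0 <= y -> 0 <= x <= 1 -> ppow x y <= 1.
Proof. intros. rewrite <- (ppow_1 y). apply ppow_mono; lra. Qed.

Lemma ppow_le_self x p : 1 <= p -> 0 <= x <= 1 -> ppow x p <= x.
Proof.
  intros Hp Hx. destruct (Req_EM_T x 0).
  - subst. rewrite ppow_0. lra.
  - rewrite ppow_pos by lra. replace p with ((p - 1) + 1) by lra. rewrite Rpower_plus.
    rewrite Rpower_1 by lra. assert (Rpower x (p - 1) <= 1).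
    { pose proof (Rle_Rpower_l x 1 (p - 1) ltac:(lra) ltac:(lra)) as HH. rewrite Rpower_1_base in HH. exact HH. }
    assert (0 < Rpower x (p - 1)) by apply Rpower_pos. nra.
Qed.

Lemma ppow_div x N p : 0 <= x -> 0 < N -> ppow (x / N) p = ppow x p / ppow N p.
Proof.
  intros Hx HN. rewrite (ppow_pos N) by lra. destruct (Req_EM_T x 0).
  - subst. unfold Rdiv. rewrite Rmult_0_l, ppow_0. lra.
  - assert (0 < / N) by (apply Rinv_0_lt_compat; lra).
    rewrite !ppow_pos by (try apply Rdiv_lt_0_compat; lra). unfold Rdiv.
    rewrite <- Rpower_mult_distr by lra. f_equal.
    unfold Rpower. rewrite ln_Rinv by lra. rewrite <- exp_Ropp. f_equal. ring.
Qed.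

Lemma Rabs_ppow x y : Rabs (ppow x y) = ppow x y.
Proof. apply Rabs_right. apply Rle_ge, ppow_nonneg. Qed.

Lemma l1_lp n v p : 1 <= p -> rsum n (fun i => Rabs (v i)) <= 1 ->
  rsum n (fun i => ppow (Rabs (v i)) p) <= 1.
Proof.
  intros Hp H. eapply Rle_trans; [|apply H]. apply rsum_le. intros i Hi. apply ppow_le_self; auto.
  split. apply Rabs_pos. eapply Rle_trans; [|apply H].
  apply (rsum_term_le n (fun i => Rabs (v i))); auto. intros; apply Rabs_pos.
Qed.

Lemma lp_le_l1 n v p L : 1 <= p -> 0 < L -> rsum n (fun i => Rabs (v i)) <= L ->
  ppow (rsum n (fun i => ppow (Rabs (v i)) p)) (1 / p) <= L.
Proof.
  intros Hp HL H.
  assert (H1 : rsum n (fun i => ppow (Rabs (v i / L)) p) <= 1).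
  { apply l1_lp; auto. rewrite (rsum_ext n _ (fun i => / L * Rabs (v i))).
    rewrite rsum_scal. apply (Rmult_le_reg_l L); auto. rewrite <- Rmult_assoc, Rinv_r; lra.
    intros. unfold Rdiv. rewrite Rabs_mult, Rabs_inv, (Rabs_right L) by lra. ring. }
  rewrite (rsum_ext n _ (fun i => / ppow L p * ppow (Rabs (v i)) p)) in H1.
  2:{ intros. unfold Rdiv. rewrite Rabs_mult, Rabs_inv, (Rabs_right L) by lra.
      change (Rabs (v i) * / L) with (Rabs (v i) / L). rewrite ppow_div by (try apply Rabs_pos; lra).
      unfold Rdiv; ring. }
  rewrite rsum_scal in H1.
  assert (HpL : 0 < ppow L p) by (rewrite ppow_pos by lra; apply Rpower_pos).
  assert (rsum n (fun i => ppow (Rabs (v i)) p) <= ppow L p).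
  { apply (Rmult_le_reg_l (/ ppow L p)). apply Rinv_0_lt_compat; auto. rewrite Rinv_l; lra. }
  eapply Rle_trans. apply ppow_mono. left; apply Rdiv_lt_0_compat; lra.
  split; [apply rsum_nonneg; intros; apply ppow_nonneg| exact H0].
  rewrite ppow_pow. replace (p * (1 / p)) with 1 by (field; lra). rewrite ppow_exp1; lra.
Qed.

Lemma relu_nonneg y : 0 <= relu y.
Proof. unfold relu. apply Rmax_r. Qed.
Lemma relu_id y : 0 <= y -> relu y = y.
Proof. intros. unfold relu. apply Rmax_left. lra. Qed.
Lemma relu_neg y : y <= 0 -> relu y = 0.
Proof. intros. unfold relu. apply Rmax_right. lra. Qed.
Lemma relu_scale y a : 0 < a -> relu (y * a) = relu y * a.
Proof.
  intros Ha. destruct (Rle_dec 0 y).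
  - rewrite !relu_id; nra.
  - rewrite !relu_neg; nra.
Qed.
Lemma relu_div y a : 0 < a -> relu (y / a) = relu y / a.
Proof. intros. unfold Rdiv. apply relu_scale. apply Rinv_0_lt_compat; auto. Qed.
Lemma relu_sub y : relu y - relu (- y) = y.
Proof. destruct (Rle_dec 0 y). rewrite relu_id, relu_neg; lra. rewrite relu_neg, relu_id; lra. Qed.
Lemma relu_relu y : relu (relu y) = relu y.
Proof. apply relu_id, relu_nonneg. Qed.

Lemma rmax_const n f : (1 <= n)%nat -> (forall j, (j < n)%nat -> f j = 1) -> rmax n f = 1.
Proof.
  induction n; intros Hn H; [lia|]. simpl. rewrite H by lia.
  destruct n. simpl. unfold Rmax; destruct (Rle_dec 0 1); lra.
  rewrite IHn by (try lia; intros; apply H; lia). unfold Rmax; destruct (Rle_dec 1 1); lra.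
Qed.

Lemma hidden_norm p q a W V : (1 <= W)%nat -> 1 <= p -> q_ok q ->
  (forall j, (j < W)%nat -> rsum (S a) (fun i => ppow (Rabs (V i j)) p) = 1) ->
  affnorm p q a W V = wid_root W q.
Proof.
  intros HW Hp Hq H. unfold affnorm, mnorm, wid_root. destruct q as [q'|].
  - rewrite (rsum_ext W _ (fun _ => 1)). rewrite rsum_const, Rmult_1_r.
    apply ppow_pos. apply lt_0_INR; lia.
    intros j Hj. rewrite H by auto. apply ppow_1.
  - apply rmax_const; auto. intros j Hj. unfold colnorm. rewrite H by auto. apply ppow_1.
Qed.

Lemma out_norm p q a V : 1 <= p -> q_ok q ->
  affnorm p q a 1 V = ppow (rsum (S a) (fun i => ppow (Rabs (V i 0%nat)) p)) (1 / p).
Proof.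
  intros Hp Hq. unfold affnorm, mnorm. destruct q as [q'|]; simpl in Hq.
  - cbn [rsum]. rewrite Rplus_0_l. rewrite ppow_pow. f_equal. field. lra.
  - cbn [rmax]. unfold colnorm. apply Rmax_right. apply ppow_nonneg.
Qed.

Inductive kind := KG (j : nat) | KU (l : nat) | KV (l : nat) | KZ | KP | KN.

Definition kind_ok (G m1 : nat) (kd : kind) : Prop :=
  match kd with KG j => (j < G)%nat | KU l => (l < m1)%nat | KV l => (l < m1)%nat | _ => True end.

Section Net.
Variables (m1 r G : nat) (p : R) (c b : nat -> R) (w : nat -> nat -> R).

Definition W := (G + 2 * m1 + 3)%nat.

Definition decode (i : nat) : kind :=
  if (i <? G)%nat then KG i
  else if (i <? G + m1)%nat then KU (i - G)
  else if (i <? G + m1 + m1)%nat then KV (i - G - m1)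
  else if (i =? G + m1 + m1)%nat then KZ
  else if (i =? S (G + m1 + m1))%nat then KP else KN.

Lemma decode_ok i : kind_ok G m1 (decode i).
Proof.
  unfold decode. destruct (Nat.ltb_spec i G); simpl; try lia.
  destruct (Nat.ltb_spec i (G + m1)); simpl; try lia.
  destruct (Nat.ltb_spec i (G + m1 + m1)); simpl; try lia.
  destruct (Nat.eqb_spec i (G + m1 + m1)); simpl; auto.
  destruct (Nat.eqb_spec i (S (G + m1 + m1))); simpl; auto.
Qed.

Lemma rsum_dec (F : kind -> R) :
  rsum W (fun i => F (decode i)) =
  rsum G (fun j => F (KG j)) + rsum m1 (fun l => F (KU l)) + rsum m1 (fun l => F (KV l))
  + F KZ + F KP + F KN.
Proof.
  unfold W. replace (G + 2 * m1 + 3)%nat with (G + (m1 + (m1 + 3)))%nat by lia.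
  rewrite !rsum_split.
  rewrite (rsum_ext G _ (fun j => F (KG j))).
  2:{ intros i Hi. unfold decode. destruct (Nat.ltb_spec i G); [auto|lia]. }
  rewrite (rsum_ext m1 _ (fun l => F (KU l))).
  2:{ intros i Hi. unfold decode. destruct (Nat.ltb_spec (G + i) G); [lia|].
      destruct (Nat.ltb_spec (G + i) (G + m1)); [|lia]. do 2 f_equal; lia. }
  rewrite (rsum_ext m1 (fun i => F (decode (G + (m1 + i))%nat)) (fun l => F (KV l))).
  2:{ intros i Hi. unfold decode. destruct (Nat.ltb_spec (G + (m1 + i)) G); [lia|].
      destruct (Nat.ltb_spec (G + (m1 + i)) (G + m1)); [lia|].
      destruct (Nat.ltb_spec (G + (m1 + i)) (G + m1 + m1)); [|lia]. do 2 f_equal; lia. }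
  simpl. unfold decode.
  repeat match goal with
  | |- context [Nat.ltb ?a ?b] => destruct (Nat.ltb_spec a b); try lia
  | |- context [Nat.eqb ?a ?b] => destruct (Nat.eqb_spec a b); try lia
  end.
  lra.
Qed.


Definition g i (x : nat -> R) := rsum m1 (fun l => w i l * x l) + b i.
Definition Sabs i := ppow (Rabs (b i)) p + rsum m1 (fun l => ppow (Rabs (w i l)) p).
Definition Nn i := ppow (Sabs i) (1 / p).
Definition beta i := if (i <? G)%nat then Nn i else 2.
Definition cp i := Rmax (c i) 0.
Definition cm i := Rmax (- c i) 0.
Definition grpQ (a : nat -> R) s x := rsum G (fun j =>
  if (s * G + j <? r)%nat then a (s * G + j)%nat * relu (g (s * G + j)%nat x) else 0).
Definition grpM (a : nat -> R) s := rsum G (fun j =>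
  if (s * G + j <? r)%nat then a (s * G + j)%nat * beta (s * G + j)%nat else 0).
Definition Qa a n x := rsum n (fun s => grpQ a s x).
Definition Ma a n := rsum n (fun s => grpM a s).
Definition Acc a n x := Qa a n x / Ma a n.

Hypothesis Hp : 1 <= p.
Hypothesis Hn : forall i, (i < r)%nat -> Rabs (b i) + rsum m1 (fun l => Rabs (w i l)) = 1.

Lemma Sabs_le1 i : (i < r)%nat -> Sabs i <= 1.
Proof.
  intros Hi. pose proof (Hn i Hi) as H. unfold Sabs.
  assert (0 <= rsum m1 (fun l => Rabs (w i l))) by (apply rsum_nonneg; intros; apply Rabs_pos).
  pose proof (Rabs_pos (b i)).
  assert (ppow (Rabs (b i)) p <= Rabs (b i)) by (apply ppow_le_self; auto; lra).
  assert (rsum m1 (fun l => ppow (Rabs (w i l)) p) <= rsum m1 (fun l => Rabs (w i l))).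
  { apply rsum_le. intros l Hl. apply ppow_le_self; auto. split. apply Rabs_pos.
    pose proof (rsum_term_le m1 (fun l => Rabs (w i l)) l ltac:(intros; apply Rabs_pos) Hl). simpl in H3. lra. }
  lra.
Qed.

Lemma Sabs_pos i : (i < r)%nat -> 0 < Sabs i.
Proof.
  intros Hi. pose proof (Hn i Hi) as H. unfold Sabs.
  assert (H0 : 0 <= rsum m1 (fun l => ppow (Rabs (w i l)) p)) by (apply rsum_nonneg; intros; apply ppow_nonneg).
  pose proof (ppow_nonneg (Rabs (b i)) p).
  destruct (Rle_lt_or_eq_dec 0 _ H0) as [Hl|He]. lra.
  destruct (Rle_lt_or_eq_dec 0 _ H1) as [Hl|He2]. lra. exfalso.
  symmetry in He2. apply ppow_zero_inv in He2.
  rewrite (rsum_zero m1 (fun l => Rabs (w i l))) in H. lra.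
  intros l Hl. apply (ppow_zero_inv _ p).
  apply (rsum_nonneg_zero m1 (fun l => ppow (Rabs (w i l)) p)); auto. intros; apply ppow_nonneg.
Qed.

Lemma Nn_pos i : (i < r)%nat -> 0 < Nn i.
Proof. intros. unfold Nn. rewrite ppow_pos by (apply Sabs_pos; auto). apply Rpower_pos. Qed.

Lemma Nn_le1 i : (i < r)%nat -> Nn i <= 1.
Proof. intros. unfold Nn. apply ppow_le_1. left; apply Rdiv_lt_0_compat; lra.
  split. left; apply Sabs_pos; auto. apply Sabs_le1; auto. Qed.

Lemma Nn_pow i : (i < r)%nat -> ppow (Nn i) p = Sabs i.
Proof. intros. unfold Nn. rewrite ppow_inv by lra. apply ppow_exp1. left; apply Sabs_pos; auto. Qed.

Lemma beta_pos i : (i < r)%nat -> 0 < beta i.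
Proof. intros. unfold beta. destruct (i <? G)%nat. apply Nn_pos; auto. lra. Qed.

Lemma beta_le2 i : (i < r)%nat -> beta i <= 2.
Proof. intros. unfold beta. destruct (i <? G)%nat. pose proof (Nn_le1 i H); lra. lra. Qed.

Lemma cp_nonneg i : 0 <= cp i. Proof. apply Rmax_r. Qed.
Lemma cm_nonneg i : 0 <= cm i. Proof. apply Rmax_r. Qed.
Lemma cp_cm i : cp i - cm i = c i.
Proof. unfold cp, cm, Rmax. destruct (Rle_dec (c i) 0), (Rle_dec (- c i) 0); lra. Qed.
Lemma cp_cm_abs i : cp i + cm i = Rabs (c i).
Proof. unfold cp, cm, Rmax, Rabs. destruct (Rle_dec (c i) 0), (Rle_dec (- c i) 0), (Rcase_abs (c i)); lra. Qed.

Lemma Rdiv_nonneg x y : 0 <= x -> 0 <= y -> 0 <= x / y.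
Proof. intros. destruct (Rle_lt_or_eq_dec 0 y H0). unfold Rdiv.
  apply Rmult_le_pos; auto. left; apply Rinv_0_lt_compat; auto.
  subst. unfold Rdiv. rewrite Rinv_0. lra. Qed.


Ltac bdestr := repeat match goal with
  | |- context [Nat.ltb ?a ?b] => destruct (Nat.ltb_spec a b); try lia
  | |- context [Nat.eqb ?a ?b] => destruct (Nat.eqb_spec a b); try lia
  end.

Definition val s x kd : R :=
  match kd with
  | KG j => if (s * G + j <? r)%nat then relu (g (s * G + j)%nat x) / beta (s * G + j)%nat else 0
  | KU l => relu (x l) | KV l => relu (- x l) | KZ => 0
  | KP => Acc cp s x | KN => Acc cm s x
  end.

Definition l1_bias kd : R :=
  match kd with KG j => if (j <? r)%nat then b j / Nn j else -1 | KU _ | KV _ => 0 | _ => -1 end.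
Definition l1_w l kd : R :=
  match kd with
  | KG j => if (j <? r)%nat then w j l / Nn j else 0
  | KU l' => if (l =? l')%nat then 1 else 0
  | KV l' => if (l =? l')%nat then -1 else 0
  | _ => 0 end.
Definition L1 (row col : nat) : R :=
  match row with O => l1_bias (decode col) | S l => l1_w l (decode col) end.

Lemma l1_val x kd : kind_ok G m1 kd ->
  relu (l1_bias kd + rsum m1 (fun l => l1_w l kd * x l)) = val 0 x kd.
Proof.
  destruct kd as [j|l|l| | |]; simpl; intros Hk.
  - bdestr.
    + rewrite (rsum_ext m1 _ (fun l => / Nn j * (w j l * x l))) by (intros; unfold Rdiv; ring).
      rewrite rsum_scal. unfold beta. bdestr. rewrite <- relu_div by (apply Nn_pos; auto).
      unfold g. f_equal. unfold Rdiv. ring.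
    + rewrite rsum_zero by (intros; lra). apply relu_neg; lra.
  - rewrite (rsum_single m1 _ l) by (auto; intros; bdestr; lra). bdestr. f_equal; ring.
  - rewrite (rsum_single m1 _ l) by (auto; intros; bdestr; lra). bdestr. f_equal; ring.
  - rewrite rsum_zero by (intros; lra). apply relu_neg; lra.
  - rewrite rsum_zero by (intros; lra). rewrite relu_neg by lra. unfold Acc, Qa. simpl. unfold Rdiv; ring.
  - rewrite rsum_zero by (intros; lra). rewrite relu_neg by lra. unfold Acc, Qa. simpl. unfold Rdiv; ring.
Qed.

Lemma Rabs_m1 : Rabs (-1) = 1.
Proof. unfold Rabs; destruct (Rcase_abs (-1)); lra. Qed.

Lemma l1_norm kd : kind_ok G m1 kd ->
  ppow (Rabs (l1_bias kd)) p + rsum m1 (fun l => ppow (Rabs (l1_w l kd)) p) = 1.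
Proof.
  destruct kd as [j|l|l| | |]; simpl; intros Hk.
  - bdestr.
    + assert (HN := Nn_pos j H).
      rewrite (rsum_ext m1 _ (fun l => / ppow (Nn j) p * ppow (Rabs (w j l)) p)).
      2:{ intros. unfold Rdiv. rewrite Rabs_mult, Rabs_inv, (Rabs_right (Nn j)) by lra.
          change (Rabs (w j i) * / Nn j) with (Rabs (w j i) / Nn j).
          rewrite ppow_div by (try apply Rabs_pos; lra). unfold Rdiv; ring. }
      rewrite rsum_scal. unfold Rdiv. rewrite Rabs_mult, Rabs_inv, (Rabs_right (Nn j)) by lra.
      change (Rabs (b j) * / Nn j) with (Rabs (b j) / Nn j).
      rewrite ppow_div by (try apply Rabs_pos; lra). rewrite Nn_pow by auto.
      assert (HS := Sabs_pos j H). unfold Sabs in *. field. lra.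
    + rewrite rsum_zero by (intros; rewrite Rabs_R0; apply ppow_0). rewrite Rabs_m1, ppow_1. lra.
  - rewrite (rsum_single m1 _ l) by (auto; intros; bdestr; rewrite Rabs_R0; apply ppow_0). bdestr.
    rewrite Rabs_R0, ppow_0, Rabs_R1, ppow_1. lra.
  - rewrite (rsum_single m1 _ l) by (auto; intros; bdestr; rewrite Rabs_R0; apply ppow_0). bdestr.
    rewrite Rabs_R0, ppow_0, Rabs_m1, ppow_1. lra.
  - rewrite rsum_zero by (intros; rewrite Rabs_R0; apply ppow_0). rewrite Rabs_m1, ppow_1. lra.
  - rewrite rsum_zero by (intros; rewrite Rabs_R0; apply ppow_0). rewrite Rabs_m1, ppow_1. lra.
  - rewrite rsum_zero by (intros; rewrite Rabs_R0; apply ppow_0). rewrite Rabs_m1, ppow_1. lra.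
Qed.


Lemma rsum_dec' (f : nat -> R) (F : kind -> R) : (forall i, f i = F (decode i)) ->
  rsum W f =
  rsum G (fun j => F (KG j)) + rsum m1 (fun l => F (KU l)) + rsum m1 (fun l => F (KV l))
  + F KZ + F KP + F KN.
Proof. intros H. rewrite <- rsum_dec. apply rsum_ext; auto. Qed.

Definition mid_bias s' kd : R :=
  match kd with
  | KG j => if (S s' * G + j <? r)%nat then b (S s' * G + j)%nat / 2 else -1
  | KU _ | KV _ => 0 | KZ => -1 | KP | KN => 0 end.
Definition accw a (sel : bool) s' ki : R :=
  match ki with
  | KG j => if (s' * G + j <? r)%nat then a (s' * G + j)%nat * beta (s' * G + j)%nat / Ma a (S s') else 0
  | KP => if sel then Ma a s' / Ma a (S s') else 0
  | KN => if sel then 0 else Ma a s' / Ma a (S s')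
  | _ => 0 end.
Definition mid_w s' ki kc : R :=
  match kc with
  | KG j => if (S s' * G + j <? r)%nat then
              match ki with KU l => w (S s' * G + j)%nat l / 2 | KV l => - w (S s' * G + j)%nat l / 2 | _ => 0 end
            else 0
  | KU l => match ki with KU l' => if (l' =? l)%nat then 1 else 0 | _ => 0 end
  | KV l => match ki with KV l' => if (l' =? l)%nat then 1 else 0 | _ => 0 end
  | KZ => 0
  | KP => accw cp true s' ki
  | KN => accw cm false s' ki
  end.
Definition rawcol s' kc row : R :=
  match row with O => mid_bias s' kc | S i => mid_w s' (decode i) kc end.
Definition colraw s' kc := rsum (S W) (fun i => ppow (Rabs (rawcol s' kc i)) p).
Definition pad s' kc := ppow (1 - colraw s' kc) (1 / p).
Definition midW s' ki kc : R := match ki with KZ => pad s' kc | _ => mid_w s' ki kc end.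
Definition Mid s' (row col : nat) : R :=
  match row with O => mid_bias s' (decode col) | S i => midW s' (decode i) (decode col) end.

Lemma mid_w_KZ s' kc : mid_w s' KZ kc = 0.
Proof. destruct kc; simpl; bdestr; auto. Qed.

Lemma grpM_nonneg a s : (forall i, 0 <= a i) -> 0 <= grpM a s.
Proof. intros Ha. apply rsum_nonneg. intros j Hj. bdestr; [|lra].
  apply Rmult_le_pos; auto. left; apply beta_pos; auto. Qed.
Lemma grpQ_nonneg a s x : (forall i, 0 <= a i) -> 0 <= grpQ a s x.
Proof. intros Ha. apply rsum_nonneg. intros j Hj. bdestr; [|lra].
  apply Rmult_le_pos; auto. apply relu_nonneg. Qed.
Lemma Ma_nonneg a n : (forall i, 0 <= a i) -> 0 <= Ma a n.
Proof. intros. apply rsum_nonneg. intros; apply grpM_nonneg; auto. Qed.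
Lemma Qa_nonneg a n x : (forall i, 0 <= a i) -> 0 <= Qa a n x.
Proof. intros. apply rsum_nonneg. intros; apply grpQ_nonneg; auto. Qed.

Lemma Ma_zero a n x : (forall i, 0 <= a i) -> Ma a n = 0 -> Qa a n x = 0.
Proof.
  intros Ha H0. unfold Qa. apply rsum_zero. intros s Hs.
  pose proof (rsum_nonneg_zero n (fun s => grpM a s) ltac:(intros; apply grpM_nonneg; auto) H0 s Hs) as H1.
  simpl in H1. unfold grpQ. apply rsum_zero. intros j Hj.
  assert (Hnn : forall j, (j < G)%nat -> 0 <= (if (s * G + j <? r)%nat then a (s * G + j)%nat * beta (s * G + j)%nat else 0)).
  { intros j0 _. bdestr. apply Rmult_le_pos; auto; left; apply beta_pos; auto. lra. }
  pose proof (rsum_nonneg_zero G _ Hnn H1 j Hj) as H2.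
  simpl in H2. revert H2. bdestr. intros H2.
  assert (a (s * G + j)%nat = 0).
  { pose proof (beta_pos _ H). destruct (Rmult_integral _ _ H2); lra. }
  rewrite H3. ring. auto.
Qed.

Lemma acc_mul a n M x : (forall i, 0 <= a i) -> Ma a n / M * Acc a n x = Qa a n x / M.
Proof.
  intros Ha. unfold Acc. destruct (Req_EM_T (Ma a n) 0) as [E|E].
  - rewrite (Ma_zero a n x Ha E), E. unfold Rdiv. ring.
  - unfold Rdiv. replace (Ma a n * / M * (Qa a n x * / Ma a n)) with (Qa a n x * / M * (Ma a n * / Ma a n)) by ring.
    rewrite Rinv_r by auto. ring.
Qed.

Lemma mid_val s' x kd : kind_ok G m1 kd ->
  relu (mid_bias s' kd + rsum W (fun i => midW s' (decode i) kd * val s' x (decode i))) = val (S s') x kd.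
Proof.
  intros Hk.
  rewrite (rsum_dec' _ (fun ki => midW s' ki kd * val s' x ki)) by reflexivity.
  cbv beta. unfold midW. simpl val at 4. rewrite Rmult_0_r.
  destruct kd as [j|l|l| | |]; simpl in Hk.
  - simpl mid_bias. simpl mid_w. unfold val at 5. bdestr.
    + rewrite (rsum_zero G) by (intros; simpl; lra). simpl val. rewrite !Rmult_0_l.
      assert (HU : rsum m1 (fun l => w (S s' * G + j)%nat l / 2 * relu (x l)) +
                   rsum m1 (fun l => - w (S s' * G + j)%nat l / 2 * relu (- x l)) =
                   rsum m1 (fun l => w (S s' * G + j)%nat l * x l) / 2).
      { rewrite <- rsum_plus. unfold Rdiv. rewrite Rmult_comm, <- rsum_scal. apply rsum_ext.
        intros l _. rewrite <- (relu_sub (x l)) at 3. ring. }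
      unfold beta. bdestr. simpl in HU. rewrite <- relu_div by lra. f_equal. unfold g. lra.
    + rewrite (rsum_zero G) by (intros; simpl; lra). rewrite (rsum_zero m1) by (intros; simpl; lra).
      rewrite (rsum_zero m1) by (intros; simpl; lra). simpl val. bdestr. apply relu_neg. lra.
  - simpl. rewrite (rsum_zero G) by (intros; lra). rewrite (rsum_zero m1 (fun l0 => 0 * _)) by (intros; lra).
    rewrite (rsum_single m1 _ l) by (auto; intros; bdestr; lra). bdestr.
    transitivity (relu (relu (x l))). f_equal; ring. apply relu_relu.
  - simpl. rewrite (rsum_zero G) by (intros; lra). rewrite (rsum_zero m1 (fun l0 => 0 * _)) by (intros; lra).
    rewrite (rsum_single m1 _ l) by (auto; intros; bdestr; lra). bdestr.
    transitivity (relu (relu (- x l))). f_equal; ring. apply relu_relu.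
  - simpl. rewrite (rsum_zero G) by (intros; lra). rewrite !(rsum_zero m1) by (intros; lra). apply relu_neg. lra.
  - simpl. rewrite !(rsum_zero m1) by (intros; lra).
    rewrite (rsum_ext G _ (fun j => / Ma cp (S s') * (if (s' * G + j <? r)%nat then cp (s' * G + j)%nat * relu (g (s' * G + j)%nat x) else 0))).
    2:{ intros j Hj. bdestr.
        - pose proof (beta_pos _ H).
          transitivity (/ Ma cp (S s') * (cp (s' * G + j)%nat * relu (g (s' * G + j)%nat x)) * (beta (s' * G + j)%nat * / beta (s' * G + j)%nat)).
          unfold Rdiv; ring. rewrite Rinv_r; lra.
        - ring. }
    rewrite rsum_scal. fold (grpQ cp s' x).
    rewrite acc_mul by (intros; apply cp_nonneg).
    unfold Acc at 2. change (Qa cp (S s') x) with (Qa cp s' x + grpQ cp s' x).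
    match goal with |- relu ?e = _ => replace e with ((Qa cp s' x + grpQ cp s' x) / Ma cp (S s')) by (unfold Rdiv; ring) end.
    apply relu_id. apply Rdiv_nonneg. pose proof (Qa_nonneg cp s' x cp_nonneg). pose proof (grpQ_nonneg cp s' x cp_nonneg). lra.
    apply Ma_nonneg. apply cp_nonneg.
  - simpl. rewrite !(rsum_zero m1) by (intros; lra).
    rewrite (rsum_ext G _ (fun j => / Ma cm (S s') * (if (s' * G + j <? r)%nat then cm (s' * G + j)%nat * relu (g (s' * G + j)%nat x) else 0))).
    2:{ intros j Hj. bdestr.
        - pose proof (beta_pos _ H).
          transitivity (/ Ma cm (S s') * (cm (s' * G + j)%nat * relu (g (s' * G + j)%nat x)) * (beta (s' * G + j)%nat * / beta (s' * G + j)%nat)).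
          unfold Rdiv; ring. rewrite Rinv_r; lra.
        - ring. }
    rewrite rsum_scal. fold (grpQ cm s' x).
    rewrite acc_mul by (intros; apply cm_nonneg).
    unfold Acc at 2. change (Qa cm (S s') x) with (Qa cm s' x + grpQ cm s' x).
    match goal with |- relu ?e = _ => replace e with ((Qa cm s' x + grpQ cm s' x) / Ma cm (S s')) by (unfold Rdiv; ring) end.
    apply relu_id. apply Rdiv_nonneg. pose proof (Qa_nonneg cm s' x cm_nonneg). pose proof (grpQ_nonneg cm s' x cm_nonneg). lra.
    apply Ma_nonneg. apply cm_nonneg.
Qed.


Lemma Rabs_half y : Rabs (y / 2) = Rabs y / 2.
Proof. unfold Rdiv. rewrite Rabs_mult, (Rabs_right (/ 2)); [auto|lra]. Qed.
Lemma Rabs_nhalf y : Rabs (- y / 2) = Rabs y / 2.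
Proof. rewrite Rabs_half, Rabs_Ropp. auto. Qed.

Lemma frac_le1 a b0 : 0 <= a -> 0 <= b0 -> / (a + b0) * b0 + a / (a + b0) <= 1.
Proof.
  intros. destruct (Req_EM_T (a + b0) 0) as [E|E].
  - rewrite E. unfold Rdiv. rewrite Rinv_0. lra.
  - replace (/ (a + b0) * b0 + a / (a + b0)) with ((a + b0) * / (a + b0)) by (unfold Rdiv; ring).
    rewrite Rinv_r; lra.
Qed.

Lemma mid_l1 s' kd : kind_ok G m1 kd -> rsum (S W) (fun i => Rabs (rawcol s' kd i)) <= 1.
Proof.
  intros Hk. rewrite rsum_shift. cbn [rawcol].
  rewrite (rsum_dec' _ (fun ki => Rabs (mid_w s' ki kd))) by reflexivity. cbv beta.
  destruct kd as [j|l|l| | |]; simpl in Hk; cbn [mid_bias mid_w accw].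
  - bdestr.
    + rewrite (rsum_zero G) by (intros; apply Rabs_R0).
      rewrite (rsum_ext m1 (fun l => Rabs (w (S s' * G + j)%nat l / 2)) (fun l => / 2 * Rabs (w (S s' * G + j)%nat l)))
        by (intros; rewrite Rabs_half; unfold Rdiv; ring).
      rewrite (rsum_ext m1 (fun l => Rabs (- w (S s' * G + j)%nat l / 2)) (fun l => / 2 * Rabs (w (S s' * G + j)%nat l)))
        by (intros; rewrite Rabs_nhalf; unfold Rdiv; ring).
      rewrite rsum_scal, Rabs_half, Rabs_R0. pose proof (Hn _ H).
      assert (0 <= rsum m1 (fun l => Rabs (w (S s' * G + j)%nat l))) by (apply rsum_nonneg; intros; apply Rabs_pos).
      pose proof (Rabs_pos (b (S s' * G + j)%nat)). lra.
    + rewrite !rsum_zero by (intros; apply Rabs_R0). rewrite Rabs_m1, Rabs_R0. lra.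
  - rewrite (rsum_zero G) by (intros; apply Rabs_R0). rewrite (rsum_zero m1 (fun l0 => Rabs 0)) by (intros; apply Rabs_R0).
    rewrite (rsum_single m1 _ l) by (auto; intros; bdestr; apply Rabs_R0). bdestr.
    rewrite Rabs_R0, Rabs_R1. lra.
  - rewrite (rsum_zero G) by (intros; apply Rabs_R0). rewrite (rsum_zero m1 (fun l0 => Rabs 0)) by (intros; apply Rabs_R0).
    rewrite (rsum_single m1 _ l) by (auto; intros; bdestr; apply Rabs_R0). bdestr.
    rewrite Rabs_R0, Rabs_R1. lra.
  - rewrite !rsum_zero by (intros; apply Rabs_R0). rewrite Rabs_m1, Rabs_R0. lra.
  - rewrite !(rsum_zero m1) by (intros; apply Rabs_R0).
    rewrite (rsum_ext G _ (fun j => / Ma cp (S s') * (if (s' * G + j <? r)%nat then cp (s' * G + j)%nat * beta (s' * G + j)%nat else 0))).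
    2:{ intros j Hj. bdestr. rewrite Rabs_right. unfold Rdiv; ring. apply Rle_ge, Rdiv_nonneg.
        apply Rmult_le_pos. apply cp_nonneg. left; apply beta_pos; auto. apply Ma_nonneg, cp_nonneg.
        rewrite Rabs_R0; ring. }
    rewrite rsum_scal. fold (grpM cp s'). rewrite Rabs_R0, Rabs_right.
    change (Ma cp (S s')) with (Ma cp s' + grpM cp s').
    pose proof (frac_le1 (Ma cp s') (grpM cp s') (Ma_nonneg cp s' cp_nonneg) (grpM_nonneg cp s' cp_nonneg)). lra.
    apply Rle_ge, Rdiv_nonneg; apply Ma_nonneg, cp_nonneg.
  - rewrite !(rsum_zero m1) by (intros; apply Rabs_R0).
    rewrite (rsum_ext G _ (fun j => / Ma cm (S s') * (if (s' * G + j <? r)%nat then cm (s' * G + j)%nat * beta (s' * G + j)%nat else 0))).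
    2:{ intros j Hj. bdestr. rewrite Rabs_right. unfold Rdiv; ring. apply Rle_ge, Rdiv_nonneg.
        apply Rmult_le_pos. apply cm_nonneg. left; apply beta_pos; auto. apply Ma_nonneg, cm_nonneg.
        rewrite Rabs_R0; ring. }
    rewrite rsum_scal. fold (grpM cm s'). rewrite Rabs_R0, Rabs_right.
    change (Ma cm (S s')) with (Ma cm s' + grpM cm s').
    pose proof (frac_le1 (Ma cm s') (grpM cm s') (Ma_nonneg cm s' cm_nonneg) (grpM_nonneg cm s' cm_nonneg)). lra.
    apply Rle_ge, Rdiv_nonneg; apply Ma_nonneg, cm_nonneg.
Qed.

Lemma mid_colsum s' kd : kind_ok G m1 kd ->
  ppow (Rabs (mid_bias s' kd)) p + rsum W (fun i => ppow (Rabs (midW s' (decode i) kd)) p) = 1.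
Proof.
  intros Hk.
  assert (Hc : colraw s' kd <= 1).
  { unfold colraw. apply l1_lp; auto. apply mid_l1; auto. }
  assert (Hc0 : 0 <= colraw s' kd) by (apply rsum_nonneg; intros; apply ppow_nonneg).
  transitivity (colraw s' kd + ppow (Rabs (pad s' kd)) p - ppow (Rabs (mid_w s' KZ kd)) p).
  - unfold colraw. rewrite rsum_shift. cbn [rawcol].
    rewrite (rsum_dec' _ (fun ki => ppow (Rabs (midW s' ki kd)) p)) by reflexivity.
    rewrite (rsum_dec' _ (fun ki => ppow (Rabs (mid_w s' ki kd)) p)) by reflexivity.
    cbv beta iota delta [midW]. lra.
  - rewrite mid_w_KZ, Rabs_R0, ppow_0. unfold pad. rewrite Rabs_ppow, ppow_inv by lra.
    rewrite ppow_exp1 by lra. lra.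
Qed.


Definition out_w s' ki : R :=
  match ki with
  | KG j => if (s' * G + j <? r)%nat then c (s' * G + j)%nat * beta (s' * G + j)%nat else 0
  | KP => Ma cp s' | KN => - Ma cm s' | _ => 0 end.
Definition Out s' (row col : nat) : R :=
  match row with O => 0 | S i => out_w s' (decode i) end.

Lemma Ma_Acc a n x : (forall i, 0 <= a i) -> Ma a n * Acc a n x = Qa a n x.
Proof. intros Ha. pose proof (acc_mul a n 1 x Ha). unfold Rdiv in H. rewrite Rinv_1, !Rmult_1_r in H. auto. Qed.

Lemma Qa_lin n x : Qa c n x = Qa cp n x - Qa cm n x.
Proof.
  unfold Qa, Rminus. rewrite <- rsum_opp, <- rsum_plus. apply rsum_ext. intros s _.
  unfold grpQ. rewrite <- rsum_opp, <- rsum_plus. apply rsum_ext. intros j _. bdestr.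
  rewrite <- (cp_cm (s * G + j)%nat). ring. ring.
Qed.

Lemma Ma_lin n : Ma (fun i => Rabs (c i)) n = Ma cp n + Ma cm n.
Proof.
  unfold Ma. rewrite <- rsum_plus. apply rsum_ext. intros s _.
  unfold grpM. rewrite <- rsum_plus. apply rsum_ext. intros j _. bdestr.
  rewrite <- (cp_cm_abs (s * G + j)%nat). ring. ring.
Qed.

Lemma out_val s' x : 0 + rsum W (fun i => out_w s' (decode i) * val s' x (decode i)) = Qa c (S s') x.
Proof.
  rewrite (rsum_dec' _ (fun ki => out_w s' ki * val s' x ki)) by reflexivity. cbv beta.
  cbn [out_w val]. rewrite !(rsum_zero m1) by (intros; lra).
  rewrite (rsum_ext G _ (fun j => if (s' * G + j <? r)%nat then c (s' * G + j)%nat * relu (g (s' * G + j)%nat x) else 0)).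
  2:{ intros j Hj. bdestr.
      - pose proof (beta_pos _ H).
        transitivity (c (s' * G + j)%nat * relu (g (s' * G + j)%nat x) * (beta (s' * G + j)%nat * / beta (s' * G + j)%nat)).
        unfold Rdiv; ring. rewrite Rinv_r; lra.
      - ring. }
  fold (grpQ c s' x). rewrite Ma_Acc by apply cp_nonneg.
  replace (- Ma cm s' * Acc cm s' x) with (- (Ma cm s' * Acc cm s' x)) by ring.
  rewrite Ma_Acc by apply cm_nonneg.
  change (Qa c (S s') x) with (Qa c s' x + grpQ c s' x). rewrite Qa_lin. lra.
Qed.

Lemma out_l1 s' : rsum (S W) (fun i => Rabs (Out s' i 0%nat)) = Ma (fun i => Rabs (c i)) (S s').
Proof.
  rewrite rsum_shift. cbn [Out].
  rewrite (rsum_dec' _ (fun ki => Rabs (out_w s' ki))) by reflexivity. cbv beta.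
  cbn [out_w]. rewrite !(rsum_zero m1) by (intros; apply Rabs_R0).
  rewrite (rsum_ext G _ (fun j => if (s' * G + j <? r)%nat then Rabs (c (s' * G + j)%nat) * beta (s' * G + j)%nat else 0)).
  2:{ intros j Hj. bdestr. rewrite Rabs_mult, (Rabs_right (beta _)); auto. apply Rle_ge; left; apply beta_pos; auto.
      apply Rabs_R0. }
  change (Ma (fun i => Rabs (c i)) (S s')) with (Ma (fun i => Rabs (c i)) s' + grpM (fun i => Rabs (c i)) s').
  unfold grpM at 1. rewrite Ma_lin, Rabs_Ropp, !Rabs_R0.
  rewrite (Rabs_right (Ma cp s')) by (apply Rle_ge, Ma_nonneg, cp_nonneg).
  rewrite (Rabs_right (Ma cm s')) by (apply Rle_ge, Ma_nonneg, cm_nonneg). lra.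
Qed.

Lemma groups_total (F : nat -> R) n :
  rsum n (fun s => rsum G (fun j => if (s * G + j <? r)%nat then F (s * G + j)%nat else 0)) =
  rsum (n * G) (fun i => if (i <? r)%nat then F i else 0).
Proof.
  induction n. reflexivity.
  replace (S n * G)%nat with (n * G + G)%nat by lia. rewrite rsum_split. cbn [rsum]. rewrite IHn. auto.
Qed.

Lemma trunc_total (F : nat -> R) N : (r <= N)%nat ->
  rsum N (fun i => if (i <? r)%nat then F i else 0) = rsum r F.
Proof.
  intros H. replace N with (r + (N - r))%nat by lia. rewrite rsum_split.
  rewrite (rsum_zero (N - r)) by (intros; bdestr; auto).
  rewrite Rplus_0_r. apply rsum_ext. intros; bdestr; auto.
Qed.


Ltac bdestr2 := repeat match goal with
  | |- context [Nat.ltb ?a ?b] => destruct (Nat.ltb_spec a b); try lia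
  | |- context [Nat.eqb ?a ?b] => destruct (Nat.eqb_spec a b); try lia
  | |- context [Nat.leb ?a ?b] => destruct (Nat.leb_spec a b); try lia
  end.

Definition Ts k (t : nat) : nat -> nat -> R :=
  if (t =? 1)%nat then L1 else if (t =? S k)%nat then Out (k - 1) else Mid (t - 2).

Lemma Ma_total a n : (r <= n * G)%nat -> Ma a n = rsum r (fun i => a i * beta i).
Proof.
  intros H. unfold Ma, grpM. pose proof (groups_total (fun i => a i * beta i) n) as E. cbv beta in E.
  rewrite E. pose proof (trunc_total (fun i => a i * beta i) (n * G) H) as E2. cbv beta in E2. exact E2.
Qed.

Lemma Qa_total a n x : (r <= n * G)%nat -> Qa a n x = rsum r (fun i => a i * relu (g i x)).
Proof.
  intros H. unfold Qa, grpQ. pose proof (groups_total (fun i => a i * relu (g i x)) n) as E. cbv beta in E.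
  rewrite E. pose proof (trunc_total (fun i => a i * relu (g i x)) (n * G) H) as E2. cbv beta in E2. exact E2.
Qed.

Lemma hidden_S d T i x j : hidden d T (S i) x j = relu (affine (d i) (T (S i)) (hidden d T i x) j).
Proof. reflexivity. Qed.

Lemma hidden_inv k n : (n < k)%nat -> forall x j, (j < W)%nat ->
  hidden (dk k m1 W) (Ts k) (S n) x j = val n x (decode j).
Proof.
  induction n; intros Hnk x j Hj.
  - rewrite hidden_S. unfold affine. replace (dk k m1 W 0) with m1 by reflexivity.
    unfold Ts. bdestr2. cbn [L1]. apply l1_val. apply decode_ok.
  - rewrite hidden_S. unfold affine.
    replace (dk k m1 W (S n)) with W by (unfold dk; bdestr2; auto).
    rewrite (rsum_ext W (fun i => Ts k (S (S n)) (S i) j * hidden (dk k m1 W) (Ts k) (S n) x i)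
                        (fun i => Ts k (S (S n)) (S i) j * val n x (decode i)))
      by (intros i Hi; rewrite IHn by (auto; lia); auto).
    unfold Ts. bdestr2. replace (S (S n) - 2)%nat with n by lia. cbn [Mid]. apply mid_val. apply decode_ok.
Qed.

Lemma main k q co : (1 <= k)%nat -> (r <= k * G)%nat -> q_ok q -> 0 < co ->
  rsum r (fun i => Rabs (c i)) <= co ->
  NN k (dk k m1 W) p q (wid_root W q) (2 * co)
    (fun x _ => rsum r (fun i => c i * relu (rsum m1 (fun l => w i l * x l) + b i))).
Proof.
  intros Hk HkG Hq Hco Hc. exists (Ts k). split; [|split].
  - intros i Hi. replace (dk k m1 W i) with W by (unfold dk; bdestr2; auto).
    apply hidden_norm; auto. unfold W; lia. intros j Hj.
    rewrite rsum_shift. unfold Ts. bdestr2.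
    + subst i. replace (dk k m1 W (1 - 1)) with m1 by reflexivity. cbn [L1]. apply l1_norm. apply decode_ok.
    + replace (dk k m1 W (i - 1)) with W by (unfold dk; bdestr2; auto). cbn [Mid]. apply mid_colsum. apply decode_ok.
  - replace (dk k m1 W k) with W by (unfold dk; bdestr2; auto).
    replace (dk k m1 W (S k)) with 1%nat by (unfold dk; bdestr2; auto).
    rewrite out_norm by auto. unfold Ts. bdestr2. apply lp_le_l1; auto. lra.
    rewrite out_l1. replace (S (k - 1)) with k by lia. rewrite Ma_total by auto.
    apply Rle_trans with (rsum r (fun i => 2 * Rabs (c i))).
    apply rsum_le. intros i Hi. pose proof (beta_le2 i Hi). pose proof (Rabs_pos (c i)). nra.
    rewrite rsum_scal. lra.
  - intros x j Hj. unfold dk in Hj. destruct (Nat.eqb_spec (S k) 0); [lia|].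
    destruct (Nat.leb_spec (S k) k); [lia|]. replace j with 0%nat by lia. unfold realize.
    replace (dk k m1 W k) with W by (unfold dk; bdestr2; auto).
    unfold affine.
    rewrite (rsum_ext W (fun i => Ts k (S k) (S i) 0%nat * hidden (dk k m1 W) (Ts k) k x i)
                        (fun i => Ts k (S k) (S i) 0%nat * val (k - 1) x (decode i))).
    2:{ intros i Hi. assert (Hk' : S (k - 1) = k) by lia.
        pose proof (hidden_inv k (k - 1) ltac:(lia) x i Hi) as HH. rewrite Hk' in HH. rewrite HH. auto. }
    unfold Ts. bdestr2. cbn [Out]. rewrite out_val. replace (S (k - 1)) with k by lia.
    rewrite Qa_total by auto. apply rsum_ext. intros; unfold g; auto.
Qed.

End Net.

Theorem lemma1 (m1 r : nat) (p : R) (q : extR) (co : R)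
  (c b : nat -> R) (w : nat -> nat -> R) :
  (1 <= m1)%nat -> (1 <= r)%nat ->
  1 <= p -> q_ok q -> 0 < co ->
  rsum r (fun i => Rabs (c i)) <= co ->
  (forall i, (i < r)%nat -> Rabs (b i) + rsum m1 (fun l => Rabs (w i l)) = 1) ->
  forall k : nat, (1 <= k <= r)%nat ->
    NN k (dk k m1 (wid r k m1)) p q (wid_root (wid r k m1) q) (2 * co)
      (fun x _ => rsum r (fun i =>
          c i * relu (rsum m1 (fun l => w i l * x l) + b i))).
Proof.
  intros Hm1 Hr Hp Hq Hco Hc Hn k Hk.
  assert (HkG : (r <= k * ((r + k - 1) / k))%nat).
  { pose proof (Nat.div_mod_eq (r + k - 1) k) as E.
    pose proof (Nat.mod_upper_bound (r + k - 1) k ltac:(lia)). lia. }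
  exact (main m1 r ((r + k - 1) / k) p c b w Hp Hn k q co ltac:(lia) HkG Hq Hco Hc).
Qed.
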